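(* Let $S$ be the three-vertex tree with root $a$, whose right child is $b$, where $b$ has a left child $c$ (preorder $132$), and let $S'$ be the three-vertex tree with a root having both a left child and a right child (preorder $213$); all edges of $S$ and $S'$ are contiguous. Let $(P,e)$ be any tree pattern. Let $Q$ be obtained from $S$ by attaching $(P,e)$ as the right subtree of the leaf $c$ via a non-contiguous edge, and let $Q'$ be obtained from $S'$ by attaching $(P,e)$ as the left subtree of the left leaf of $S'$ via a non-contiguous edge. Then $Q$ and $Q'$ are Wilf-equivalent.
   Context: $\mathcal{T}_n$ is the set of binary trees on $n$ vertices labeled $1,\dots,n$ by the search tree property (labels of combined trees reassigned by this property). $c_L,c_R,p$: left child, right child, parent. A tree pattern is $(P,e)$, $P\in\mathcal{T}_k$, $e\colon[k]\setminus\{\text{root}\}\to\{0,1\}$; edge $(i,p(i))$ is contiguous if $e(i)=1$, non-contiguous if $e(i)=0$. $T\in\mathcal{T}_n$ contains $(P,e)$ if there is an injection $f\colon[k]\to[n]$ such that for every non-root $i$ of $P$: if $e(i)=1$, $f(i)$ is the left (resp. right) child of $f(p(i))$ when $i$ is the left (resp. right) child of $p(i)$; if $e(i)=0$, $f(i)$ lies in the left (resp. right) subtree of $f(p(i))$. $\mathcal{T}_n(Q)$ is the set of avoiders of $Q$. $Q,Q'$ are Wilf-equivalent if $|\mathcal{T}_n(Q)|=|\mathcal{T}_n(Q')|$ for all $n\ge0$. *)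

(* Defs.v *)
From mathcomp Require Import all_boot.
From mathcomp Require Import boolp.
Set Implicit Arguments. Unset Strict Implicit. Unset Printing Implicit Defensive.

(* Unlabeled binary trees; the labels 1..n of the paper are determined by the
   search-tree (in-order) property, so a vertex is identified with its position,
   i.e. the path from the root: a seq bool, false = go left, true = go right. *)
Inductive tree : Type := Leaf | Node of tree & tree.

Fixpoint tsize (t : tree) : nat :=
  if t is Node l r then (tsize l + tsize r).+1 else 0.

Fixpoint tvert (t : tree) (u : seq bool) : bool :=
  match t, u with
  | Leaf, _ => false
  | Node _ _, [::] => true
  | Node l r, d :: s => tvert (if d then r else l) s
  end.

Fixpoint trees_upto (d : nat) : seq tree :=
  if d is d'.+1 then Leaf :: [seq Node l r | l <- trees_upto d', r <- trees_upto d']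
  else [:: Leaf].

(* Tree patterns (P,e): a binary tree whose child edges carry a flag,
   true = contiguous, false = non-contiguous.
   [PN l cl r cr] has left subtree l, left edge flag cl (meaningful only when l
   is nonempty), right subtree r, right edge flag cr. *)
Inductive pat : Type := PE | PN of pat & bool & pat & bool.

Fixpoint pvert (p : pat) (u : seq bool) : bool :=
  match p, u with
  | PE, _ => false
  | PN _ _ _ _, [::] => true
  | PN l _ r _, d :: s => pvert (if d then r else l) s
  end.

(* e(v): flag of the edge between the (non-root) vertex v and its parent *)
Fixpoint pedge (p : pat) (u : seq bool) : bool :=
  match p, u with
  | PN l cl r cr, d :: s =>
      if s is [::] then (if d then cr else cl) else pedge (if d then r else l) s
  | _, _ => false
  end.

Definition contains (Q : pat) (T : tree) : Prop :=
  exists f : seq bool -> seq bool,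
    [/\ (forall u v, pvert Q u -> pvert Q v -> f u = f v -> u = v),
        (forall u, pvert Q u -> tvert T (f u)) &
        (forall u d, pvert Q (rcons u d) ->
           if pedge Q (rcons u d) then f (rcons u d) = rcons (f u) d
           else exists s, f (rcons u d) = f u ++ d :: s)].

(* |T_n(Q)| : number of trees with n vertices avoiding Q
   (every tree with n vertices has depth <= n). *)
Definition num_avoiders (Q : pat) (n : nat) : nat :=
  count (fun T => (tsize T == n) && `[< ~ contains Q T >]) (trees_upto n).

Definition wilf_equiv (Q Q' : pat) : Prop :=
  forall n, num_avoiders Q n = num_avoiders Q' n.

(* Q : S = root a, right child b (contiguous), b has left child c (contiguous);
   P attached as right subtree of c via a non-contiguous edge. *)
Definition Q20 (P : pat) : pat :=
  PN PE false (PN (PN PE false P false) true PE false) true.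

(* Q' : S' = root with left and right children (contiguous);
   P attached as left subtree of the left leaf via a non-contiguous edge. *)
Definition Q20' (P : pat) : pat :=
  PN (PN P false PE false) true (PN PE false PE false) true.

(* Main.v *)
Require Import Defs.
From HB Require Import structures.
From mathcomp Require Import all_boot.
From mathcomp Require Import boolp.
From mathcomp Require Import zify.
Require Import Defs.
Set Implicit Arguments. Unset Strict Implicit. Unset Printing Implicit Defensive.

Fixpoint tree_eqb (a b : tree) : bool :=
  match a, b with
  | Leaf, Leaf => true
  | Node l r, Node l' r' => tree_eqb l l' && tree_eqb r r'
  | _, _ => false end.

Lemma tree_eqP : Equality.axiom tree_eqb.
Proof.
elim=> [|l IHl r IHr] [|l' r'] /=; try by constructor.
apply: (iffP andP) => [[/IHl -> /IHr ->]//|[<- <-]]; split; [exact/IHl|exact/IHr].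
Qed.
HB.instance Definition _ := hasDecEq.Build tree tree_eqP.

Fixpoint tdepth t := if t is Node l r then (maxn (tdepth l) (tdepth r)).+1 else 0.

Lemma mem_trees d t : (t \in trees_upto d) = (tdepth t <= d).
Proof.
elim: d t => [|d IH] [|l r] //=.
rewrite in_cons /=; apply/allpairsP/idP => [[[l' r'] /= [Hl Hr [-> ->]]]|].
    by rewrite ltnS geq_max -!IH Hl Hr.
  rewrite ltnS geq_max => /andP[Hl Hr]; exists (l, r); by rewrite /= !IH.
Qed.

Lemma uniq_trees d : uniq (trees_upto d).
Proof.
elim: d => //= d IH; apply/andP; split.
  by apply/allpairsP => [[p [_ _]]].
apply: allpairs_uniq => // [[a b]] [c e] _ _ /=; by case=> -> ->.
Qed.

Lemma depth_size t : tdepth t <= tsize t.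
Proof. elim: t => //= l Hl r Hr; rewrite ltnS geq_max; apply/andP; split; lia. Qed.

Lemma tree_ind_size (Pr : tree -> Prop) :
  (forall T, (forall S, tsize S < tsize T -> Pr S) -> Pr T) -> forall T, Pr T.
Proof.
move=> H T; move: {2}(tsize T).+1 (ltnSn (tsize T)) => n.
elim: n T => [|n IH] T // HT; apply H => S HS; apply IH; lia.
Qed.

Fixpoint phi (t : tree) : tree :=
  match t with
  | Leaf => Leaf
  | Node L R =>
    (fix sp (R : tree) : tree :=
       match R with
       | Leaf => Node (phi L) Leaf
       | Node X R' => Node (match X with Leaf => Leaf | Node A B => Node B (phi A) end) (sp R')
       end) R
  end.

Definition psi (X : tree) := if X is Node A B then Node B (phi A) else Leaf.
Fixpoint spine (a : tree) (R : tree) :=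
  if R is Node X R' then Node (psi X) (spine a R') else Node a Leaf.

Lemma phiE L R : phi (Node L R) = spine (phi L) R.
Proof. by elim: R => //= X _ R' <-. Qed.

Lemma catI (T : Type) (s t1 t2 : seq T) : s ++ t1 = s ++ t2 -> t1 = t2.
Proof. by elim: s => //= x s IH [] /IH. Qed.

Fixpoint tsub (t : tree) (u : seq bool) {struct u} : tree :=
  match u with
  | [::] => t
  | d :: s => if t is Node l r then tsub (if d then r else l) s else Leaf
  end.

Lemma tsub_Leaf u : tsub Leaf u = Leaf.
Proof. by case: u. Qed.

Lemma tvert_cat t w v : tvert t (w ++ v) = tvert (tsub t w) v.
Proof. elim: w t => [|d w IH] [|l r] //=; by rewrite ?tsub_Leaf. Qed.

Lemma tsub_cat t w v : tsub t (w ++ v) = tsub (tsub t w) v.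
Proof. elim: w t => [|d w IH] [|l r] //=; by case: (v) IH. Qed.

Definition conds (Q : pat) (T : tree) (f : seq bool -> seq bool) : Prop :=
  [/\ (forall u v, pvert Q u -> pvert Q v -> f u = f v -> u = v),
      (forall u, pvert Q u -> tvert T (f u)) &
      (forall u d, pvert Q (rcons u d) ->
         if pedge Q (rcons u d) then f (rcons u d) = rcons (f u) d
         else exists s, f (rcons u d) = f u ++ d :: s)].

Lemma pvert_rcons Q u d : pvert Q (rcons u d) -> pvert Q u.
Proof. elim: u Q => [|x u IH] [|l cl r cr] //=; exact: IH. Qed.

Lemma prefix Q T f w a : conds Q T f -> (exists s, f a = w ++ s) ->
  forall p, pvert Q (a ++ p) -> exists s, f (a ++ p) = w ++ s.
Proof.
case=> _ _ He Ha; elim/last_ind => [|p d IH]; first by rewrite cats0.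
rewrite -rcons_cat => Hv.
have [s Hs] := IH (pvert_rcons Hv).
move: (He _ _ Hv); case: pedge => [->|[s' ->]]; rewrite Hs.
- by exists (rcons s d); rewrite rcons_cat.
- by exists (s ++ d :: s'); rewrite catA.
Qed.

Lemma shift_down Q T f w : conds Q T f ->
  (forall u, pvert Q u -> exists s, f u = w ++ s) ->
  conds Q (tsub T w) (fun u => drop (size w) (f u)).
Proof.
case=> Hi Hv He Hp.
have E u : pvert Q u -> f u = w ++ drop (size w) (f u).
  by move=> /Hp [s ->]; rewrite drop_size_cat.
split.
- move=> u v Hu Hv' Huv; apply: Hi => //; by rewrite (E u) // (E v) // Huv.
- move=> u Hu; by rewrite -tvert_cat -E // Hv.
- move=> u d Hud; have Hu := pvert_rcons Hud.
  move: (He _ _ Hud) => H; rewrite (E _ Hud) (E _ Hu) in H.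
  case: (pedge Q (rcons u d)) in H *.
  + by rewrite rcons_cat in H; apply: catI H.
  + case: H => s H; exists s; rewrite -catA in H; exact: catI H.
Qed.

Lemma shift_up Q T f w : conds Q (tsub T w) f -> conds Q T (fun u => w ++ f u).
Proof.
case=> Hi Hv He; split.
- by move=> u v Hu Hv' /catI; apply Hi.
- by move=> u Hu; rewrite tvert_cat Hv.
- move=> u d Hud; move: (He _ _ Hud); case: pedge => [->|[s ->]]; first by rewrite rcons_cat.
  by exists s; rewrite catA.
Qed.

Lemma restrict Q P T f a :
  (forall p, pvert Q (a ++ p) = pvert P p) ->
  (forall p d, pedge Q (a ++ rcons p d) = pedge P (rcons p d)) ->
  conds Q T f -> conds P T (fun p => f (a ++ p)).
Proof.
move=> HV HE [Hi Hv He]; split.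
- move=> u v; rewrite -!HV => Hu Hv' /(Hi _ _ Hu Hv'); exact: catI.
- by move=> u; rewrite -HV; apply Hv.
- move=> u d; rewrite -HV -HE -!rcons_cat; exact: He.
Qed.

Definition rc Q S := exists f, conds Q S f /\ f [::] = [::].

Lemma contains_root Q T : contains Q T <-> exists w, rc Q (tsub T w).
Proof.
split.
- case=> f Hf; exists (f [::]); exists (fun u => drop (size (f [::])) (f u)); split.
  + apply: shift_down => // u Hu.
    by apply: (prefix (a := [::]) Hf) => //; exists [::]; rewrite cats0.
  + by rewrite drop_size.
- case=> w [f [Hf _]]; exists (fun u => w ++ f u); exact: shift_up.
Qed.

Lemma contains_sub P T w : contains P (tsub T w) -> contains P T.
Proof. case=> f Hf; eexists; exact: shift_up Hf. Qed.

Definition badQ P S := exists L Y Z W, S = Node L (Node (Node Y Z) W) /\ contains P Z.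
Definition badQ' P S := exists Y1 Y2 R1 R2, S = Node (Node Y1 Y2) (Node R1 R2) /\ contains P Y1.

Lemma vQ20 P u : pvert (Q20 P) u ->
  [\/ u = [::], u = [:: true], u = [:: true; false] | exists p, u = [:: true, false, true & p] /\ pvert P p].
Proof.
case: u => [|[] [|[] [|[] p]]] //= H; try by constructor.
by apply: Or44; exists p.
Qed.

Lemma vQ20' P u : pvert (Q20' P) u ->
  [\/ u = [::], u = [:: false], u = [:: true] | exists p, u = [:: false, false & p] /\ pvert P p].
Proof.
case: u => [|[] [|[] [|x p]]] //= H; try by constructor.
- by apply: Or44; exists [::].
- by apply: Or44; exists (x :: p).
Qed.

Lemma eQ20 P p d : pedge (Q20 P) [:: true, false, true & rcons p d] = pedge P (rcons p d).
Proof. by case: p. Qed.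

Lemma eQ20' P p d : pedge (Q20' P) [:: false, false & rcons p d] = pedge P (rcons p d).
Proof. by case: p. Qed.

Lemma rc_Q20 P S : pvert P [::] -> (rc (Q20 P) S <-> badQ P S).
Proof.
move=> HP; split.
- case=> f [Hf H0]; have [Hi Hv He] := Hf.
  have H1 : f [:: true] = [:: true].
    by have := He [::] true; rewrite /= H0; apply.
  have H2 : f [:: true; false] = [:: true; false].
    by have := He [:: true] false; rewrite /= H1; apply.
  have [s H3] : exists s, f [:: true; false; true] = [:: true; false; true] ++ s.
    by have := He [:: true; false] true; rewrite /= H2; case/(_ HP) => s ->; exists s.
  have HPc : conds P (tsub S [:: true; false; true]) (fun p => drop 3 (f ([:: true; false; true] ++ p))).
    have Hr := restrict (Q := Q20 P) (a := [:: true; false; true]) (P := P) (fun p => erefl) (@eQ20 P) Hf.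
    suff Hpre : forall p, pvert P p -> exists s', f ([:: true; false; true] ++ p) = [:: true; false; true] ++ s'.
      exact: (shift_down (w := [:: true; false; true]) Hr Hpre).
    move=> p Hp; apply: (prefix (a := [::]) Hr) => //; by exists s.
  move: (Hv _ (isT : pvert (Q20 P) [:: true; false])) HPc; rewrite H2.
  case: S {Hf Hi Hv He} => [|L [|[|Y Z] W]] //= _ HPc.
  by exists L, Y, Z, W; split => //; eexists; exact HPc.
- case=> L [Y [Z [W [-> [g Hg]]]]].
  have [Hgi Hgv Hge] := Hg.
  exists (fun u => if u is [:: true, false, true & p] then [:: true, false, true & g p] else u).
  split => //; split.
  + move=> u v /vQ20 [->|->|->|[p [-> Hp]]] /vQ20 [->|->|->|[q [-> Hq]]] //=.
    by case=> /(Hgi _ _ Hp Hq) ->.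
  + move=> u /vQ20 [->|->|->|[p [-> Hp]]] //=; exact: Hgv.
  + move=> u d; case: u => [|x [|y [|z p]]]; first by case: d.
    * by case: x; case: d.
    * by case: x; case: y; case: d => //= _; exists (g [::]).
    * case: x; case: y; case: z => //= Hp.
      have -> : (match rcons p d with [::] => false | _ :: _ => pedge P (rcons p d) end) = pedge P (rcons p d) by case: (p).
      by move: (Hge p d Hp); case: pedge => [->|[s ->]] //; exists s.
Qed.

Lemma rc_Q20' P S : pvert P [::] -> (rc (Q20' P) S <-> badQ' P S).
Proof.
move=> HP; split.
- case=> f [Hf H0]; have [Hi Hv He] := Hf.
  have H1 : f [:: false] = [:: false].
    by have := He [::] false; rewrite /= H0; apply.
  have H1' : f [:: true] = [:: true].
    by have := He [::] true; rewrite /= H0; apply.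
  have [s H3] : exists s, f [:: false; false] = [:: false; false] ++ s.
    by have := He [:: false] false; rewrite /= H1; case/(_ HP) => s ->; exists s.
  have HPc : conds P (tsub S [:: false; false]) (fun p => drop 2 (f ([:: false; false] ++ p))).
    have Hr := restrict (Q := Q20' P) (a := [:: false; false]) (P := P) (fun p => erefl) (@eQ20' P) Hf.
    suff Hpre : forall p, pvert P p -> exists s', f ([:: false; false] ++ p) = [:: false; false] ++ s'.
      exact: (shift_down (w := [:: false; false]) Hr Hpre).
    move=> p Hp; apply: (prefix (a := [::]) Hr) => //; by exists s.
  move: (Hv _ (isT : pvert (Q20' P) [:: false])) (Hv _ (isT : pvert (Q20' P) [:: true])) HPc.
  rewrite H1 H1'.
  case: S {Hf Hi Hv He} => [|[|Y1 Y2] [|R1 R2]] //= _ _ HPc.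
  by exists Y1, Y2, R1, R2; split => //; eexists; exact HPc.
- case=> Y1 [Y2 [R1 [R2 [-> [g Hg]]]]].
  have [Hgi Hgv Hge] := Hg.
  exists (fun u => if u is [:: false, false & p] then [:: false, false & g p] else u).
  split => //; split.
  + move=> u v /vQ20' [->|->|->|[p [-> Hp]]] /vQ20' [->|->|->|[q [-> Hq]]] //=.
    by case=> /(Hgi _ _ Hp Hq) ->.
  + move=> u /vQ20' [->|->|->|[p [-> Hp]]] //=; exact: Hgv.
  + move=> u d; case: u => [|x [|y p]]; first by case: d.
    * by case: x; case: d => //= _; exists (g [::]).
    * case: x; case: y => //= Hp.
      have -> : (match rcons p d with [::] => false | _ :: _ => pedge P (rcons p d) end) = pedge P (rcons p d) by case: (p).
      by move: (Hge p d Hp); case: pedge => [->|[s ->]] //; exists s.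
Qed.

Definition anyQ P T := exists w, badQ P (tsub T w).
Definition anyQ' P T := exists w, badQ' P (tsub T w).

Lemma any_node (X : tree -> Prop) l r :
  (exists w, X (tsub (Node l r) w)) <->
  X (Node l r) \/ (exists w, X (tsub l w)) \/ (exists w, X (tsub r w)).
Proof.
split.
- by case=> [[|[] w]] /= H; [left|right;right|right;left]; try exists w.
- case=> [H|[[w H]|[w H]]]; [by exists [::]|by exists (false :: w)|by exists (true :: w)].
Qed.

Lemma anyQ_node P l r : anyQ P (Node l r) <-> badQ P (Node l r) \/ anyQ P l \/ anyQ P r.
Proof. exact: any_node. Qed.
Lemma anyQ'_node P l r : anyQ' P (Node l r) <-> badQ' P (Node l r) \/ anyQ' P l \/ anyQ' P r.
Proof. exact: any_node. Qed.

Lemma anyQ_leaf P : ~ anyQ P Leaf.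
Proof. by case=> w; rewrite tsub_Leaf; case=> L [Y [Z [W []]]]. Qed.
Lemma anyQ'_leaf P : ~ anyQ' P Leaf.
Proof. by case=> w; rewrite tsub_Leaf; case=> L [Y [Z [W []]]]. Qed.

Lemma anyQ_cP P T : anyQ P T -> contains P T.
Proof.
case=> w [L [Y [Z [W [E HZ]]]]].
apply: (contains_sub (w := w ++ [:: true; false; true])); by rewrite tsub_cat E.
Qed.
Lemma anyQ'_cP P T : anyQ' P T -> contains P T.
Proof.
case=> w [L [Y [Z [W [E HZ]]]]].
apply: (contains_sub (w := w ++ [:: false; false])); by rewrite tsub_cat E.
Qed.

Lemma contains_Q20 P T : pvert P [::] -> (contains (Q20 P) T <-> anyQ P T).
Proof.
move=> HP; rewrite /anyQ; split.
- by case/contains_root => w /(rc_Q20 _ HP) H; exists w.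
- by case=> w /(rc_Q20 _ HP) H; apply/contains_root; exists w.
Qed.
Lemma contains_Q20' P T : pvert P [::] -> (contains (Q20' P) T <-> anyQ' P T).
Proof.
move=> HP; rewrite /anyQ'; split.
- by case/contains_root => w /(rc_Q20' _ HP) H; exists w.
- by case=> w /(rc_Q20' _ HP) H; apply/contains_root; exists w.
Qed.

Definition parentbad P R := exists A Z R'', R = Node (Node A Z) R'' /\ contains P Z.
Definition goodQ P X := if X is Node A B then contains P B \/ anyQ P A else False.
Fixpoint rQ P R := if R is Node X R' then goodQ P X \/ rQ P R' else False.

Lemma goodQ_spec P X : goodQ P X <-> (exists A Z, X = Node A Z /\ contains P Z) \/ anyQ P X.
Proof.
case: X => [|A B] /=.
- split => // [[[A [Z [] //]]|/anyQ_leaf //]].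
- have := anyQ_node P A B; have := @anyQ_cP P B.
  have HB : badQ P (Node A B) -> contains P B.
    case=> L [Y [Z [W [[_ ->] HZ]]]].
    by apply: (contains_sub (w := [:: false; true])).
  have HC : (exists A' Z, Node A B = Node A' Z /\ contains P Z) <-> contains P B.
    split; first by case=> A' [Z [[_ ->]]].
    by move=> H; exists A, B.
  tauto.
Qed.

Lemma rQ_spec P R : parentbad P R \/ anyQ P R <-> rQ P R.
Proof.
elim: R => [|X _ R' IH] /=.
- split => // [[[A [Z [R'' []]]]|/anyQ_leaf //] //].
- have := anyQ_node P X R'; have := goodQ_spec P X.
  have H1 : badQ P (Node X R') <-> parentbad P R'.
    split; first by case=> L [Y [Z [W [[_ ->] H]]]]; exists Y, Z, W.
    by case=> A [Z [R'' [-> H]]]; exists X, A, Z, R''.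
  have H2 : parentbad P (Node X R') <-> exists A Z, X = Node A Z /\ contains P Z.
    split; first by case=> A [Z [R'' [[-> _] H]]]; exists A, Z.
    by case=> A [Z [-> H]]; exists A, Z, R'.
  tauto.
Qed.

Lemma anyQ_NR P L R : anyQ P (Node L R) <-> anyQ P L \/ rQ P R.
Proof.
have := anyQ_node P L R; have := rQ_spec P R.
have H1 : badQ P (Node L R) <-> parentbad P R.
  split; first by case=> L' [Y [Z [W [[_ ->] H]]]]; exists Y, Z, W.
  by case=> A [Z [R'' [-> H]]]; exists L, A, Z, R''.
tauto.
Qed.

Definition goodQ' P X := if X is Node A B then contains P B \/ anyQ' P (phi A) else False.
Fixpoint rQ' P R := if R is Node X R' then goodQ' P X \/ rQ' P R' else False.

Lemma spine_node a R : exists R1 R2, spine a R = Node R1 R2.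
Proof. case: R => [|X R] /=; eexists; eexists; reflexivity. Qed.

Lemma psi_spec P X S : (exists R1 R2, S = Node R1 R2) ->
  (badQ' P (Node (psi X) S) \/ anyQ' P (psi X) <-> goodQ' P X).
Proof.
move=> [R1 [R2 ->]]; case: X => [|A B] /=.
- split => // [[[Y1 [Y2 [R3 [R4 []]]]]|/anyQ'_leaf] //].
- have := anyQ'_node P B (phi A); have := @anyQ'_cP P B.
  have HB : badQ' P (Node B (phi A)) -> contains P B.
    case=> Y1 [Y2 [R3 [R4 [[-> _ ] HY]]]].
    by apply: (contains_sub (w := [:: false])).
  have HC : badQ' P (Node (Node B (phi A)) (Node R1 R2)) <-> contains P B.
    split; first by case=> Y1 [Y2 [R3 [R4 [[-> _ _ _] H]]]].
    by move=> H; exists B, (phi A), R1, R2.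
  tauto.
Qed.

Lemma anyQ'_spine P a R : anyQ' P (spine a R) <-> anyQ' P a \/ rQ' P R.
Proof.
elim: R => [|X _ R' IH] /=.
- have := anyQ'_node P a Leaf; have := @anyQ'_leaf P.
  have : ~ badQ' P (Node a Leaf) by case=> Y1 [Y2 [R1 [R2 []]]].
  tauto.
- have := anyQ'_node P (psi X) (spine a R'); have := psi_spec P X (spine_node a R').
  tauto.
Qed.

Lemma rQ_eq P R : (forall A, tsize A < tsize R -> (anyQ P A <-> anyQ' P (phi A))) ->
  (rQ P R <-> rQ' P R).
Proof.
elim: R => [|X _ R' IH] //= H.
have IH' := IH (fun A h => H A ltac:(lia)).

case: X H => [|A B] /= H; first tauto.
have := H A ltac:(lia). tauto.
Qed.

Lemma main_equiv P T : anyQ P T <-> anyQ' P (phi T).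
Proof.
elim/tree_ind_size: T => [[|L R]] IH.
- by split => /= [/anyQ_leaf|/anyQ'_leaf].
- rewrite phiE.
  have := anyQ_NR P L R; have := anyQ'_spine P (phi L) R.
  have := IH L ltac:(simpl; lia).
  have := rQ_eq (P := P) (R := R) (fun A h => IH A ltac:(simpl; lia)).
  tauto.
Qed.

Lemma tsize_spine a R : (forall A, tsize A < tsize R -> tsize (phi A) = tsize A) ->
  tsize (spine a R) = tsize a + tsize R + 1.
Proof.
elim: R => [|X _ R' IH] /= H; first lia.
rewrite IH => [|A h]; last by apply: H; lia.
case: X H => [|A B] /= H; first lia.
rewrite H /=; lia.
Qed.

Lemma tsize_phi T : tsize (phi T) = tsize T.
Proof.
elim/tree_ind_size: T => [[|L R]] IH //.
rewrite phiE tsize_spine => [|A h]; last by apply: IH => /=; lia.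
rewrite IH /=; lia.
Qed.

Lemma spine_inj a1 a2 R1 R2 :
  (forall A B, tsize A < tsize R1 -> phi A = phi B -> A = B) ->
  spine a1 R1 = spine a2 R2 -> R1 = R2 /\ a1 = a2.
Proof.
elim: R1 R2 => [|X1 _ R1 IH] [|X2 R2] H /=.
- by case=> ->.
- by case=> _; case: (R2).
- by case=> _; case: (R1).
- case=> Hpsi Hsp.
  have [-> ->] := IH R2 (fun A B h => H A B ltac:(simpl; lia)) Hsp.
  split => //; congr Node => //.
  case: X1 X2 H Hpsi => [|A1 B1] [|A2 B2] //= H [-> /H].
  by move=> ->; last lia.
Qed.

Lemma phi_inj : injective phi.
Proof.
move=> T1; elim/tree_ind_size: T1 => [[|L1 R1]] IH [|L2 R2] //.
- by rewrite phiE; case: (spine_node (phi L2) R2) => ? [? ->].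
- by rewrite phiE; case: (spine_node (phi L1) R1) => ? [? ->].
- rewrite !phiE => /spine_inj [].
    by move=> A B h; apply: IH => /=; lia.
  by move=> -> /IH -> //=; lia.
Qed.

Definition sn n := [seq T <- trees_upto n | tsize T == n].

Lemma perm_sn n : perm_eq (map phi (sn n)) (sn n).
Proof.
have U : uniq (sn n) by apply: filter_uniq; apply: uniq_trees.
have U' : uniq (map phi (sn n)) by rewrite map_inj_uniq //; apply: phi_inj.
have Hsub : {subset map phi (sn n) <= sn n}.
  move=> x /mapP [y]; rewrite !mem_filter => /andP [/eqP Hy _] ->.
  rewrite tsize_phi Hy eqxx /= mem_trees.
  by have := depth_size (phi y); rewrite tsize_phi Hy.
have [_ Heq] := uniq_min_size U' Hsub (eq_leq (esym (size_map phi (sn n)))).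
exact: uniq_perm.
Qed.

Lemma count_sn (a b : pred tree) n : (forall T, a T = b (phi T)) ->
  count a (sn n) = count b (sn n).
Proof.
move=> H; rewrite (eq_count H) -(count_map phi b).
by apply/permP; apply: perm_sn.
Qed.

Theorem lemma20 (P : pat) : P <> PE -> wilf_equiv (Q20 P) (Q20' P).
Proof.
move=> HP0; have HP : pvert P [::] by case: P HP0.
move=> n; rewrite /num_avoiders.
have E Q : count (fun T => (tsize T == n) && `[< ~ contains Q T >]) (trees_upto n)
         = count (fun T => `[< ~ contains Q T >]) (sn n).
  by rewrite count_filter; apply: eq_count => T /=; rewrite andbC.
rewrite !E; apply: count_sn => T.
apply: asbool_equiv_eq.
have := contains_Q20 T HP; have := contains_Q20' (phi T) HP; have := main_equiv P T.
tauto.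
Qed.
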